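(* In the $n$-dimensional alcove gambler's ruin environment with a state-independent differentiable policy $\pi_{\vec\theta}$, for a trajectory starting at $\vec\eta\in\mathcal{D}^n_m$ and terminating at $\vec\nu\in\mathcal{H}^n_m$, the single-trajectory REINFORCE policy-gradient estimate is \[ \nabla_{\vec\theta} J = \Big[\sum_{i=1}^n (\nu_i - \eta_i)\,\nabla_{\vec\theta}\log\pi(a = \vec e_i\mid\vec\theta)\Big]\, G_{\vec\eta\vec\nu}, \] where $G_{\vec\eta\vec\nu} = \lambda_{\vec\nu} - \sum_{i=1}^n(\nu_i-\eta_i)$; hence the distribution of the gradient is obtained from the distribution of the terminal state $\vec\nu$, with $\Pr\{\vec s_T=\vec\nu\} = b_{\vec\eta\vec\nu'}\prod_{i}\pi(\vec e_i\mid\vec\theta)^{\nu'_i-\eta_i}\,\pi(a=\vec\nu-\vec\nu'\mid\vec\theta)$, where $\vec\nu'\in\mathcal{D}^n_m$ is the interior neighbour of $\vec\nu$ and $b_{\vec\eta\vec\nu'}$ is the number of positive-unit-step lattice paths from $\vec\eta$ to $\vec\nu'$ staying in $\mathcal{D}^n_m$.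
   Context: $\mathcal{D}^n_m = \{(x_1,\dots,x_n)\in\mathbb{Z}^n : x_1 > x_2 > \cdots > x_n > x_1 - m\}$ and $\mathcal{H}^n_m = \{x : x_i = x_{i+1} \text{ for some } 1\le i<n\}\cup\{x : x_1 - x_n = m\}$. The environment has states $\mathcal{D}^n_m\cup\mathcal{H}^n_m$, actions $\vec e_1,\dots,\vec e_n$ (action $\vec e_i$ moves $x$ to $x+\vec e_i$), terminating states $\mathcal{H}^n_m$, undiscounted reward $-1$ per step plus bonus $\lambda_{\vec s}$ on reaching terminating $\vec s$. The policy does not observe the state. The REINFORCE estimate with batch size one is $\big(\sum_t\nabla_{\vec\theta}\log\pi(a_t\mid\vec\theta)\big)G$, $G$ being the episodic return. *)

(* Defs.v *)
From HB Require Import structures.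
From mathcomp Require Import all_boot all_order all_algebra.
From mathcomp Require Import all_classical all_reals all_analysis.
Set Implicit Arguments. Unset Strict Implicit. Unset Printing Implicit Defensive.
Import Order.TTheory GRing.Theory Num.Theory.
Import numFieldNormedType.Exports.
Local Open Scope ring_scope.

(* States of the n-dimensional alcove gambler's ruin: integer vectors
   x = (x_1,...,x_n), coordinate x_{k+1} being stored at index k : 'I_n. *)
Definition state (n : nat) := {ffun 'I_n -> int}.

Definition inD (n m : nat) (x : state n) : bool :=
  [forall i : 'I_n, forall j : 'I_n, (j == i.+1 :> nat) ==> (x j < x i)] &&
  [forall i : 'I_n, forall j : 'I_n,
     ((i == 0%N :> nat) && (j == n.-1 :> nat)) ==> (x j > x i - m%:Z)].

Definition inH (n m : nat) (x : state n) : bool :=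
  [exists i : 'I_n, exists j : 'I_n, (j == i.+1 :> nat) && (x i == x j)] ||
  [exists i : 'I_n, exists j : 'I_n,
     [&& (i == 0%N :> nat), (j == n.-1 :> nat) & (x i - x j == m%:Z)]].

Definition step (n : nat) (x : state n) (a : 'I_n) : state n :=
  [ffun i => x i + ((i == a) : nat)%:Z].

Definition traj (n : nat) (x : state n) (s : seq 'I_n) (t : nat) : state n :=
  foldl (@step n) x (take t s).

Definition terminates_at (n m : nat) (eta nu : state n) (s : seq 'I_n) : bool :=
  [forall t : 'I_(size s), inD m (traj eta s t)] && (traj eta s (size s) == nu) &&
  inH m nu.

Definition episodic_return (R : realType) (n m : nat) (lam : state n -> R)
    (eta : state n) (s : seq 'I_n) : R :=
  \sum_(t < size s)
    (-1 + (if inH m (traj eta s t.+1) then lam (traj eta s t.+1) else 0)).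

Definition grad (R : realType) (d : nat) (f : 'rV[R]_d -> R) (th : 'rV[R]_d)
  : 'rV[R]_d := \row_(k < d) 'D_(delta_mx 0 k) f th.

Definition gradlog (R : realType) (n d : nat) (pi : 'rV[R]_d -> 'I_n -> R)
    (th : 'rV[R]_d) (a : 'I_n) : 'rV[R]_d :=
  grad (fun th' => ln (pi th' a)) th.

Definition reinforce (R : realType) (n m d : nat) (pi : 'rV[R]_d -> 'I_n -> R)
    (lam : state n -> R) (th : 'rV[R]_d) (eta : state n) (s : seq 'I_n)
  : 'rV[R]_d :=
  episodic_return m lam eta s *: \sum_(a <- s) gradlog pi th a.

Definition seqprob (R : realType) (n d : nat) (pi : 'rV[R]_d -> 'I_n -> R)
    (th : 'rV[R]_d) (s : seq 'I_n) : R :=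
  \prod_(a <- s) pi th a.

(* Pr{ s_T = nu }: sum over the termination time k of the probability of all
   length-k action sequences whose episode terminates at time k in nu
   (a series of nonnegative terms, summed in the extended reals) *)
Definition PrTerm (R : realType) (n m d : nat) (pi : 'rV[R]_d -> 'I_n -> R)
    (th : 'rV[R]_d) (eta nu : state n) : \bar R :=
  (\sum_(k <oo)
     (\sum_(s : k.-tuple 'I_n) (terminates_at m eta nu s)%:R * seqprob pi th s)%:E)%E.

Definition D_path (n m : nat) (x y : state n) (s : seq 'I_n) : bool :=
  [forall t : 'I_(size s).+1, inD m (traj x s t)] && (traj x s (size s) == y).

(* Every positive-unit-step path from x
   to y has length sum_i (y_i - x_i), so it suffices to count action sequences
   of that length (if that sum is negative, no sequence of length |sum| ends at
   y, so the count is 0, as it should be). *)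
Definition nb_paths (n m : nat) (x y : state n) : nat :=
  #|[set s : (absz (\sum_i (y i - x i))).-tuple 'I_n | D_path m x y s]|.

(* Main.v *)
Require Import Defs.
From HB Require Import structures.
From mathcomp Require Import all_boot all_order all_algebra.
From mathcomp Require Import all_classical all_reals all_analysis.
From mathcomp Require Import zify ring lra.
Set Implicit Arguments. Unset Strict Implicit. Unset Printing Implicit Defensive.
Import Order.TTheory GRing.Theory Num.Theory.
Import numFieldNormedType.Exports.
Local Open Scope ring_scope.
Lemma foldl_coord n (x : state n) (s : seq 'I_n) i :
  (foldl (@step n) x s) i = x i + (count_mem i s)%:Z.
Proof.
elim: s x => [|a s IH] x /=; first by rewrite addr0.
rewrite IH ffunE /= -addrA; congr (_ + _); rewrite [a == i]eq_sym PoszD //.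
Qed.

Lemma traj_full n (x : state n) s : traj x s (size s) = foldl (@step n) x s.
Proof. by rewrite /traj take_size. Qed.

Lemma sum_count n (s : seq 'I_n) : (\sum_i count_mem i s)%N = size s.
Proof.
elim: s => [|a s IH] /=; first by rewrite big1.
rewrite big_split /= IH (bigD1 a) //= eqxx big1 // => i /negbTE.
by rewrite eq_sym => ->.
Qed.

Lemma sum_coord n (x : state n) s :
  \sum_i (foldl (@step n) x s i - x i) = (size s)%:Z.
Proof.
rewrite -sum_count (big_morph Posz PoszD (erefl 0%:Z)).
by apply: eq_bigr => i _; rewrite foldl_coord addrC addKr.
Qed.

Lemma inD_notH n m (x : state n) : inD m x -> ~~ inH m x.
Proof.
move=> /andP[/forallP h1 /forallP h2]; apply/norP; split.
- apply/existsP => -[i /existsP [j /andP [/eqP hj /eqP e]]].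
  have := implyP (forallP (h1 i) j) (introT eqP hj).
  by rewrite e ltxx.
- apply/existsP => -[i /existsP [j /and3P [hi hj /eqP e]]].
  have := implyP (forallP (h2 i) j) (introT andP (conj hi hj)).
  by rewrite -e; lia.
Qed.

Lemma aux1 n m (x : state n) (i i' j : 'I_n) : inD m x -> (i' = i.+1 :> nat) ->
  step x j i = step x j i' -> j = i'.
Proof.
move=> /andP[/forallP h1 _] hi.
have := implyP (forallP (h1 i) i') (introT eqP hi).
rewrite !ffunE /=.
case: (eqVneq i' j) => [->//|ne].
case: (i == j) => /=; lia.
Qed.

Lemma aux2 n m (x : state n) (i i' j : 'I_n) : inD m x -> (i = 0%N :> nat) ->
  (i' = n.-1 :> nat) -> step x j i - step x j i' = m%:Z -> j = i.
Proof.
move=> /andP[_ /forallP h2] hi hi'.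
have := implyP (forallP (h2 i) i') (introT andP (conj (introT eqP hi) (introT eqP hi'))).
rewrite !ffunE /=.
case: (eqVneq i j) => [->//|ne].
case: (i' == j) => /=; lia.
Qed.

Lemma uniq_nb n m (x y : state n) j k : inD m x -> inD m y ->
  step x j = step y k -> inH m (step x j) -> j = k.
Proof.
move=> Dx Dy e /orP[/existsP[i /existsP[i' /andP[/eqP hi /eqP h]]]|
  /existsP[i /existsP[i' /and3P[/eqP hi /eqP hi' /eqP h]]]].
- rewrite (aux1 Dx hi h); symmetry; apply: (aux1 Dy hi); by rewrite -e.
- rewrite (aux2 Dx hi hi' h); symmetry; apply: (aux2 Dy hi hi'); by rewrite -e.
Qed.

Lemma step_inj n (x y : state n) j : step x j = step y j -> x = y.
Proof.
move=> h; apply/ffunP => i; have := congr1 (fun f : state n => f i) h.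
by rewrite !ffunE => /addIr.
Qed.

Lemma traj_rcons n (x : state n) p a t : (t <= size p)%N ->
  traj x (rcons p a) t = traj x p t.
Proof. by move=> ht; rewrite /traj -cats1 takel_cat. Qed.

Lemma traj_rcons_full n (x : state n) p a :
  traj x (rcons p a) (size p).+1 = step (traj x p (size p)) a.
Proof. by rewrite /traj take_oversize ?size_rcons // take_size foldl_rcons. Qed.

Lemma prod_count (R : comRingType) n (f : 'I_n -> R) (s : seq 'I_n) :
  \prod_(a <- s) f a = \prod_i f i ^+ count_mem i s.
Proof.
elim: s => [|a s IH]; first by rewrite big_nil big1.
rewrite big_cons IH /=.
under [RHS]eq_bigr do rewrite exprD.
rewrite big_split /=; congr (_ * _).
rewrite (bigD1 a) //= eqxx expr1 big1 ?mulr1 // => i /negbTE.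
by rewrite eq_sym => ->.
Qed.

Lemma sum_countv (V : zmodType) n (g : 'I_n -> V) (s : seq 'I_n) :
  \sum_(a <- s) g a = \sum_i g i *+ count_mem i s.
Proof.
elim: s => [|a s IH]; first by rewrite big_nil big1.
rewrite big_cons IH /=.
under [RHS]eq_bigr do rewrite mulrnDr.
rewrite big_split /=; congr (_ + _).
rewrite (bigD1 a) //= eqxx mulr1n big1 ?addr0 // => i /negbTE.
by rewrite eq_sym => ->.
Qed.
Lemma term_inv n m (eta nu nu' : state n) j s : inD m eta -> inD m nu' ->
  nu = step nu' j -> terminates_at m eta nu s ->
  exists2 p, s = rcons p j & D_path m eta nu' p.
Proof.
move=> De Dn' -> /andP[/andP[/forallP hD /eqP hf] hH].
case/lastP: s hD hf => [|p a] hD hf.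
  move: hf; rewrite /traj /= => e.
  by move: (inD_notH De); rewrite e hH.
have Dx : inD m (traj eta p (size p)).
  have lt : (size p < size (rcons p a))%N by rewrite size_rcons.
  by have := hD (Ordinal lt); rewrite /= traj_rcons.
rewrite size_rcons traj_rcons_full in hf.
have aj : a = j by apply: (uniq_nb Dx Dn' hf); rewrite hf.
subst a; have ex := step_inj hf.
exists p => //; apply/andP; split; last by rewrite ex.
apply/forallP => t.
have lt : (t < size (rcons p j))%N by rewrite size_rcons.
by have := hD (Ordinal lt); rewrite /= traj_rcons // -ltnS.
Qed.

Lemma term_of n m (eta nu nu' : state n) j p : inH m nu -> nu = step nu' j ->
  D_path m eta nu' p -> terminates_at m eta nu (rcons p j).
Proof.
move=> hH enu /andP[/forallP hD /eqP hf]; rewrite /terminates_at hH andbT enu.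
apply/andP; split; last by rewrite size_rcons traj_rcons_full hf.
apply/forallP => t.
have lt : (t < (size p).+1)%N by rewrite -(size_rcons p j).
by rewrite traj_rcons ?(hD (Ordinal lt)) // -ltnS -(size_rcons p j).
Qed.

Lemma ret_eq (R : realType) n m (lam : state n -> R) (eta nu : state n) s :
  inD m eta -> terminates_at m eta nu s ->
  episodic_return m lam eta s = lam nu - (size s)%:R.
Proof.
move=> De /andP[/andP[/forallP hD /eqP hf] hH].
case/lastP: s hD hf => [|p a] hD hf.
  move: hf; rewrite /traj /= => e.
  by move: (inD_notH De); rewrite e hH.
rewrite /episodic_return.
rewrite size_rcons big_ord_recr /=.
rewrite size_rcons in hf; rewrite hf hH.
rewrite (eq_bigr (fun _ => -1)); last first.
  move=> t _.
  have lt : (t.+1 < size (rcons p a))%N by rewrite size_rcons ltnS.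
  by rewrite (negbTE (inD_notH (hD (Ordinal lt)))) addr0.
rewrite sumr_const card_ord mulNrn.
rewrite -[(size p).+1]addn1 natrD; lra.
Qed.
Theorem corollary2 (R : realType) (n m d : nat)
    (pi : 'rV[R]_d -> 'I_n -> R) (lam : state n -> R) (th : 'rV[R]_d)
    (eta nu : state n) :
  (forall th' a, 0 < pi th' a) ->
  (forall th', \sum_a pi th' a = 1) ->
  (forall a th', differentiable (fun th'' => pi th'' a) th') ->
  inD m eta -> inH m nu ->
  (forall s : seq 'I_n, terminates_at m eta nu s ->
     reinforce m pi lam th eta s =
     (lam nu - \sum_i (nu i - eta i)%:~R) *:
       \sum_i ((nu i - eta i)%:~R *: gradlog pi th i))
  /\
  (forall (nu' : state n) (j : 'I_n), inD m nu' -> nu = step nu' j ->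
     PrTerm m pi th eta nu =
     ((nb_paths m eta nu')%:R * (\prod_i pi th i ^ (nu' i - eta i)) * pi th j)%:E).
Proof.
move=> _ _ _ De hH; split.
  move=> s hT; rewrite /reinforce (ret_eq _ De hT).
  have hf : traj eta s (size s) = nu by case/andP: hT => /andP[_ /eqP].
  have Hc i : nu i - eta i = (count_mem i s)%:Z.
    by rewrite -hf traj_full foldl_coord addrC addKr.
  have Hs : \sum_i (nu i - eta i)%:~R = (size s)%:R :> R.
    under eq_bigr do rewrite Hc -pmulrn.
    by rewrite -natr_sum sum_count.
  rewrite Hs; congr (_ *: _); rewrite sum_countv.
  by apply: eq_bigr => i _; rewrite Hc -pmulrn scaler_nat.
move=> nu' j Dn' enu.
pose K := (absz (\sum_i (nu' i - eta i))).+1.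
pose C := \prod_i pi th i ^ (nu' i - eta i) * pi th j.
have Hprob s : terminates_at m eta nu s -> seqprob pi th s = C.
  move=> /(term_inv De Dn' enu) [p -> /andP[_ /eqP hf]].
  rewrite /seqprob -cats1 big_cat big_seq1 prod_count /C; congr (_ * _).
  by apply: eq_bigr => i _; rewrite -hf traj_full foldl_coord addrC addKr.
have Hsize s : terminates_at m eta nu s -> size s = K.
  move=> /(term_inv De Dn' enu) [p -> /andP[_ /eqP hf]].
  by rewrite size_rcons /K -hf traj_full sum_coord.
have Hterm k : \sum_(s : k.-tuple 'I_n) (terminates_at m eta nu s)%:R * seqprob pi th s
    = if k == K then (nb_paths m eta nu')%:R * C else 0.
  case: eqP => [->|ne]; last first.
    apply: big1 => s _; case h: (terminates_at m eta nu s); last by rewrite /= mul0r.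
    by exfalso; apply: ne; rewrite -(Hsize s h) size_tuple.
  transitivity (\sum_(s : K.-tuple 'I_n | terminates_at m eta nu s) C).
    rewrite [RHS]big_mkcond; apply: eq_bigr => s _.
    by case h: (terminates_at m eta nu s); rewrite /= ?mul1r ?mul0r ?Hprob.
  rewrite sumr_const [RHS]mulr_natl; congr (_ *+ _).
  transitivity #|[set s : K.-tuple 'I_n | terminates_at m eta nu s]|.
    by apply: eq_card => s; rewrite inE.
  pose f := fun p : (absz (\sum_i (nu' i - eta i))).-tuple 'I_n => rcons_tuple p j.
  have f_inj : injective f.
    move=> p q e; apply: val_inj; exact: (rcons_injl j (congr1 val e)).
  suff -> : [set s : K.-tuple 'I_n | terminates_at m eta nu s] =
    f @: [set p : (absz (\sum_i (nu' i - eta i))).-tuple 'I_n | D_path m eta nu' p] by rewrite (card_imset _ f_inj).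
  apply/setP => s; rewrite inE; apply/idP/imsetP.
    move=> hT; have [p es hp] := term_inv De Dn' enu hT.
    have sz : size p == absz (\sum_i (nu' i - eta i)).
      by have := size_tuple s; rewrite es size_rcons => -[->].
    exists (Tuple sz); first by rewrite inE.
    by apply/val_inj; rewrite /= es.
  by move=> [p]; rewrite inE => hp ->; exact: (term_of hH enu hp).
rewrite /PrTerm -mulrA -/C.
apply: cvg_lim => //; apply: cvg_near_cst; near=> N.
under eq_bigr do rewrite Hterm.
rewrite (bigD1_seq K) ?mem_iota ?iota_uniq //=; last first.
  near: N; exists K.+1 => // x /= hx; by rewrite add0n subn0.
rewrite eqxx big1 ?adde0 // => k /negbTE ->.
by [].
Unshelve. all: by end_near.
Qed.
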